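(* For all integers $k,n$ with $n\geq 3$ and $2\leq k\leq n$, $\mathrm{ldim}_f(K_k\square K_n)=\frac{n}{2}$.
   Context: $K_k$ denotes the complete graph on $k$ vertices; $d$ is the shortest-path distance. For an edge $uv$ of a connected graph $X$, $L_X(uv)=\{x\in V(X): d_X(u,x)\neq d_X(v,x)\}$. A function $f:V(X)\to[0,1]$ is a local resolving function of $X$ if $\sum_{x\in L_X(uv)}f(x)\geq 1$ for every edge $uv$; $\mathrm{ldim}_f(X)$ is the minimum of $\sum_{v}f(v)$ over all local resolving functions. The Cartesian product $G\square H$ has vertex set $V(G)\times V(H)$, with $(u_1,v_1)$ adjacent to $(u_2,v_2)$ iff ($u_1u_2\in E(G)$ and $v_1=v_2$) or ($u_1=u_2$ and $v_1v_2\in E(H)$). *)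

(* Defs.v *)
From HB Require Import structures.
From mathcomp Require Import all_boot all_order all_algebra.
Set Implicit Arguments. Unset Strict Implicit. Unset Printing Implicit Defensive.
Import Order.TTheory GRing.Theory Num.Theory.

(* A simple graph is a symmetric irreflexive relation e : rel T on a finType T. *)

Definition complete_graph (k : nat) : rel 'I_k := fun i j => i != j.
Arguments complete_graph k : clear implicits.

Definition cart_prod (T1 T2 : finType) (eG : rel T1) (eH : rel T2)
  : rel (T1 * T2) :=
  fun x y => ((eG x.1 y.1) && (x.2 == y.2)) || ((x.1 == y.1) && (eH x.2 y.2)).

Fixpoint walk_n (T : finType) (e : rel T) (m : nat) (x y : T) : bool :=
  match m with
  | 0 => x == y
  | m'.+1 => [exists z, e x z && walk_n e m' z y]
  end.

(* In a connected graph this m is < #|T|, so searching in [0, #|T|) suffices;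
   (for unreachable pairs the value is #|T|, irrelevant for connected graphs). *)
Definition dist (T : finType) (e : rel T) (x y : T) : nat :=
  find (fun m => walk_n e m x y) (iota 0 #|T|).

Definition Lset (T : finType) (e : rel T) (u v : T) : {set T} :=
  [set x | dist e u x != dist e v x].

Local Open Scope ring_scope.

Definition local_resolving_function (R : realFieldType) (T : finType)
  (e : rel T) (f : T -> R) : Prop :=
  (forall x, 0 <= f x <= 1) /\
  (forall u v, e u v -> 1 <= \sum_(x in Lset e u v) f x).

Definition is_ldimf (R : realFieldType) (T : finType) (e : rel T) (r : R) : Prop :=
  (exists f : T -> R, local_resolving_function e f /\ \sum_(x : T) f x = r) /\
  (forall f : T -> R, local_resolving_function e f -> r <= \sum_(x : T) f x).

(* Main.v *)
Require Import Defs.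
From HB Require Import structures.
From mathcomp Require Import all_boot all_order all_algebra.
From mathcomp Require Import ring lra.
Import Order.TTheory GRing.Theory Num.Theory.

Lemma ex1E (T : finType) (e : rel T) x y : [exists z, e x z && (z == y)] = e x y.
Proof.
apply/existsP/idP => [[z /andP[h /eqP<-]]|h] //; by exists y; rewrite h eqxx.
Qed.

Lemma dist_cp k n (x y : 'I_k * 'I_n) : (3 <= k * n)%N ->
  dist (cart_prod (complete_graph k) (complete_graph n)) x y =
  ((x.1 != y.1) + (x.2 != y.2))%N.
Proof.
move=> H; rewrite /dist card_prod !card_ord -(subnKC H) iotaD /= ex1E.
case: x y => [x1 x2] [y1 y2] /=.
rewrite /cart_prod /complete_graph /= xpair_eqE.
case: (eqVneq x1 y1) => [->|h1]; case: (eqVneq x2 y2) => [->|h2] //=.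
rewrite ifT //; apply/existsP; exists (y1, x2); rewrite /= h1 eqxx /=.
apply/existsP; exists (y1, y2); by rewrite /= !eqxx h2.
Qed.
Local Open Scope ring_scope.
Lemma half_sum (R : realFieldType) n (C : 'I_n -> R) : (2 <= n)%N ->
  (forall i j, i != j -> 1 <= C i + C j) -> n%:R / 2%:R <= \sum_j C j.
Proof.
move=> n2 H.
have N2 : 2 <= n%:R :> R by rewrite (ler_nat R 2 n).
case: (boolP [exists j, C j < 2^-1]).
- case/existsP => j0 h0; rewrite (bigD1 j0) //=.
  have S1 : \sum_(j | j != j0) (1 - C j0) <= \sum_(j | j != j0) C j.
    apply: ler_sum => j hj; have := H _ _ hj; lra.
  have Hs : \sum_(j:'I_n) (1 - C j0) = (1 - C j0) + \sum_(j | j != j0) (1 - C j0)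
    by rewrite (bigD1 j0).
  rewrite sumr_const card_ord -mulr_natl in Hs.
  have : 0 <= (n%:R - 2) * (2^-1 - C j0) by apply: mulr_ge0; lra.
  nra.
- rewrite negb_exists => /forallP hall.
  have : \sum_(j : 'I_n) (2^-1 : R) <= \sum_j C j.
    apply: ler_sum => j _; have := hall j; rewrite -leNgt; done.
  rewrite sumr_const card_ord -mulr_natl; lra.
Qed.

Section S.
Variables (k n : nat).
Local Notation e := (cart_prod (complete_graph k) (complete_graph n)).

Lemma Lset_rowP (u v x : 'I_k * 'I_n) : (3 <= k * n)%N -> u.1 != v.1 -> u.2 = v.2 ->
  (x \in Lset e u v) = (x.1 == u.1) || (x.1 == v.1).
Proof.
move=> H h1 h2; rewrite inE !dist_cp // h2 eqn_add2r.
move: h1; case: u v x {h2} => [u1 u2] [v1 v2] [x1 x2] /= h1.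
case: (eqVneq x1 u1) => [ex|hu]; case: (eqVneq x1 v1) => [ey|hv] //=.
rewrite -ex -ey in h1; by move/eqP: h1.
Qed.

Lemma Lset_colP (u v x : 'I_k * 'I_n) : (3 <= k * n)%N -> u.1 = v.1 -> u.2 != v.2 ->
  (x \in Lset e u v) = (x.2 == u.2) || (x.2 == v.2).
Proof.
move=> H h1 h2; rewrite inE !dist_cp // h1 eqn_add2l.
move: h2; case: u v x {h1} => [u1 u2] [v1 v2] [x1 x2] /= h2.
case: (eqVneq x2 u2) => [ex|hu]; case: (eqVneq x2 v2) => [ey|hv] //=.
rewrite -ex -ey in h2; by move/eqP: h2.
Qed.

Variable R : realFieldType.

Lemma rowsum (a : 'I_k) (F : 'I_k * 'I_n -> R) :
  \sum_(x | x.1 == a) F x = \sum_l F (a, l).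
Proof.
transitivity (\sum_(i | i == a) \sum_(j | true) F (i, j)).
  by rewrite pair_big_dep; apply: eq_big => [[i j]|[i j]] //=; rewrite andbT.
apply: (big_pred1 a) => i; reflexivity.
Qed.

Lemma colsum (b : 'I_n) (F : 'I_k * 'I_n -> R) :
  \sum_(x | x.2 == b) F x = \sum_i F (i, b).
Proof.
transitivity (\sum_(i | true) \sum_(j | j == b) F (i, j)).
  by rewrite pair_big_dep; apply: eq_big => [[i j]|[i j]] //=.
by apply: eq_bigr => i _; apply: (big_pred1 b) => j; reflexivity.
Qed.

Lemma Lset_row_sum (u v : 'I_k * 'I_n) (F : 'I_k * 'I_n -> R) :
  (3 <= k * n)%N -> u.1 != v.1 -> u.2 = v.2 ->
  \sum_(x in Lset e u v) F x = \sum_(x | x.1 == u.1) F x + \sum_(x | x.1 == v.1) F x.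
Proof.
move=> H h1 h2; rewrite (bigID (fun x => x.1 == u.1)) /=; congr (_ + _);
  apply: eq_bigl => x; rewrite Lset_rowP //.
- by rewrite andb_idl // => ->.
- move: h1; case: u v x {h2 H} => [u1 u2] [v1 v2] [x1 x2] /= h1.
  case: (eqVneq x1 u1) => [ex|hx] //=; last by rewrite andbT.
  by rewrite ex (negbTE h1).
Qed.

Lemma Lset_col_sum (u v : 'I_k * 'I_n) (F : 'I_k * 'I_n -> R) :
  (3 <= k * n)%N -> u.1 = v.1 -> u.2 != v.2 ->
  \sum_(x in Lset e u v) F x = \sum_(x | x.2 == u.2) F x + \sum_(x | x.2 == v.2) F x.
Proof.
move=> H h1 h2; rewrite (bigID (fun x => x.2 == u.2)) /=; congr (_ + _);
  apply: eq_bigl => x; rewrite Lset_colP //.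
- by rewrite andb_idl // => ->.
- move: h2; case: u v x {h1 H} => [u1 u2] [v1 v2] [x1 x2] /= h2.
  case: (eqVneq x2 u2) => [ex|hx] //=; last by rewrite andbT.
  by rewrite ex (negbTE h2).
Qed.

Lemma total_sum (F : 'I_k * 'I_n -> R) :
  \sum_x F x = \sum_(j : 'I_n) \sum_(x | x.2 == j) F x.
Proof. by rewrite (partition_big snd predT). Qed.

End S.

Theorem theorem3p14 (R : realFieldType) (k n : nat) :
  (3 <= n)%N -> (2 <= k)%N -> (k <= n)%N ->
  is_ldimf (cart_prod (complete_graph k) (complete_graph n))
           (n%:R / 2%:R : R).
Proof.
move=> n3 k2 kn.
have Hkn : (3 <= k * n)%N.
  by apply: (leq_trans n3); rewrite leq_pmull // (leq_trans _ k2).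
have K2 : 2 <= k%:R :> R by rewrite (ler_nat R 2 k).
have KN : k%:R <= n%:R :> R by rewrite ler_nat.
split.
- pose c : R := (2 * k%:R)^-1.
  have c2k : c * (2 * k%:R) = 1 by rewrite mulVf //; apply/eqP => h; lra.
  have c0 : 0 <= c by rewrite invr_ge0; lra.
  exists (fun _ => c); split; last first.
    rewrite sumr_const card_prod !card_ord -[c *+ _]mulr_natr natrM /c.
    have kn0 : k%:R != 0 :> R by apply/eqP => h; lra.
    by field; rewrite kn0.
  split => [x|u v].
    apply/andP; split => //; nra.
  rewrite /cart_prod /complete_graph => /orP[/andP[h1 /eqP h2]|/andP[/eqP h1 h2]].
  + rewrite Lset_row_sum // !rowsum !sumr_const card_ord -mulr_natl; nra.
  + rewrite Lset_col_sum // !colsum !sumr_const card_ord -mulr_natl; nra.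
- move=> f [_ Hf].
  rewrite total_sum; apply: half_sum; first exact: ltnW.
  move=> i j hij.
  have k0 : (0 < k)%N by apply: leq_trans k2.
  pose a : 'I_k := Ordinal k0.
  have he : cart_prod (complete_graph k) (complete_graph n) (a, i) (a, j).
    by apply/orP; right; apply/andP; split.
  have := Hf _ _ he; rewrite Lset_col_sum //.
Qed.
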